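(* Let $d_1,d_2\in\mathbb{N}$ with $2\leq d_1\leq d_2$. Let $\omega_d$ denote the maximally entangled projector on $\mathbb{C}^d\otimes\mathbb{C}^d$ and define on $\mathbb{C}^{d_1}\otimes\mathbb{C}^{d_1}\otimes\mathbb{C}^{d_2}\otimes\mathbb{C}^{d_2}$ (factors labelled $A_1,B_1,A_2,B_2$) \[ Z = (\mathbb{1}-\omega_{d_1})_{A_1B_1}\otimes(\mathbb{1}-\omega_{d_2})_{A_2B_2} + (d_1-1)(d_2+1)\,(\omega_{d_1})_{A_1B_1}\otimes(\omega_{d_2})_{A_2B_2}. \] With respect to the bipartition $A=A_1A_2$, $B=B_1B_2$, $Z$ is positive semidefinite and PPT, its partial transpose $Z^\Gamma$ (transposition on $B_1B_2$) satisfies $\mathrm{SN}(Z^\Gamma)\leq 4$, and hence \[ \mathrm{SN}(Z)-\mathrm{SN}(Z^\Gamma)\geq\lceil d_2/d_1\rceil - 4. \]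
   Context: $\omega_d=\ket{\Omega_d}\bra{\Omega_d}$, $\ket{\Omega_d}=\frac{1}{\sqrt d}\sum_{i=1}^d\ket{i}\otimes\ket{i}$. PPT means the partial transpose (transposition in the computational basis on the $B$ system) is positive semidefinite. The Schmidt rank of $\ket{\psi}\in\mathbb{C}^{d_A}\otimes\mathbb{C}^{d_B}$ is the rank of $\mathrm{tr}_A\ket{\psi}\bra{\psi}$; for a nonzero positive semidefinite $\rho$, $\mathrm{SN}(\rho)$ is the minimum over decompositions $\rho=\sum_ip_i\ket{\psi_i}\bra{\psi_i}$ ($p_i>0$) of the maximal Schmidt rank of the $\ket{\psi_i}$, computed with respect to the bipartition $A:B$. *)

(* Defs.v *)
(* Finite-dimensional quantum operators are represented as
   functions on finite index types (computational basis), with scalars in a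
   numClosedFieldType C (instantiated with C := R[i], R : realType). *)
From HB Require Import structures.
From mathcomp Require Import all_boot all_order all_algebra.
From mathcomp Require Import complex.
From mathcomp Require Import reals.
From Stdlib Require Import ClassicalEpsilon.
Set Implicit Arguments. Unset Strict Implicit. Unset Printing Implicit Defensive.
Import Order.TTheory GRing.Theory Num.Theory.
Local Open Scope ring_scope.

Section QDefs.
Variable C : numClosedFieldType.

Definition vec (I : finType) := I -> C.
Definition op (I : finType) := I -> I -> C.

Definition proj (I : finType) (v : vec I) : op I := fun x y => v x * (v y)^*.

Definition idop (I : finType) : op I := fun x y => (x == y)%:R.

Definition addop (I : finType) (X Y : op I) : op I := fun x y => X x y + Y x y.
Definition subop (I : finType) (X Y : op I) : op I := fun x y => X x y - Y x y.
Definition scaleop (I : finType) (c : C) (X : op I) : op I := fun x y => c * X x y.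

Definition kron (I J : finType) (X : op I) (Y : op J) : op (I * J)%type :=
  fun x y => X x.1 y.1 * Y x.2 y.2.

Definition opmx (I : finType) (X : op I) : 'M[C]_#|I| :=
  \matrix_(i, j) X (enum_val i) (enum_val j).

(* positive semidefinite: <v, X v> >= 0 for all v (over C this includes
   hermiticity) *)
Definition psd (I : finType) (X : op I) : Prop :=
  forall v : vec I, 0 <= \sum_x \sum_y (v x)^* * X x y * v y.

Definition Omega (d : nat) : vec ('I_d * 'I_d)%type :=
  fun x => (x.1 == x.2)%:R / sqrtC d%:R.
Arguments Omega : clear implicits.
Definition omega (d : nat) : op ('I_d * 'I_d)%type := proj (Omega d).
Arguments omega : clear implicits.

Definition ptB (IA IB : finType) (X : op (IA * IB)%type) : op (IA * IB)%type :=
  fun x y => X (x.1, y.2) (y.1, x.2).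

Definition PPT (IA IB : finType) (X : op (IA * IB)%type) : Prop := psd (ptB X).

Definition ptrA (IA IB : finType) (X : op (IA * IB)%type) : op IB :=
  fun b b' => \sum_a X (a, b) (a, b').

Definition schmidt_rank (IA IB : finType) (psi : vec (IA * IB)%type) : nat :=
  \rank (opmx (ptrA (proj psi))).

Definition SN_decomp (IA IB : finType) (rho : op (IA * IB)%type) (k : nat) : Prop :=
  exists (n : nat) (p : 'I_n -> C) (psi : 'I_n -> vec (IA * IB)%type),
    [/\ forall i, 0 < p i,
        forall x y, rho x y = \sum_i p i * proj (psi i) x y
      & (\max_(i < n) schmidt_rank (psi i))%N = k].

Definition is_SN (IA IB : finType) (rho : op (IA * IB)%type) (k : nat) : Prop :=
  SN_decomp rho k /\ forall k', SN_decomp rho k' -> (k <= k')%N.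

Definition SN (IA IB : finType) (rho : op (IA * IB)%type) : nat :=
  epsilon (inhabits 0%N) (is_SN rho).

(* regroup an operator on (A1 B1) (A2 B2) to the bipartition (A1 A2) | (B1 B2) *)
Definition regroup (TA1 TB1 TA2 TB2 : finType)
  (X : op ((TA1 * TB1) * (TA2 * TB2))%type) : op ((TA1 * TA2) * (TB1 * TB2))%type :=
  fun x y => X ((x.1.1, x.2.1), (x.1.2, x.2.2)) ((y.1.1, y.2.1), (y.1.2, y.2.2)).

Definition Zop (d1 d2 : nat) : op (('I_d1 * 'I_d2) * ('I_d1 * 'I_d2))%type :=
  regroup (addop (kron (subop (@idop _) (omega d1)) (subop (@idop _) (omega d2)))
                 (scaleop ((d1%:R - 1) * (d2%:R + 1)) (kron (omega d1) (omega d2)))).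

Arguments Zop : clear implicits.
End QDefs.
Arguments Zop : clear implicits.
Arguments omega : clear implicits.
Arguments Omega : clear implicits.

(* Main.v *)
Require Import Defs.
From HB Require Import structures.
From mathcomp Require Import all_boot all_order all_algebra.
From mathcomp Require Import complex reals ring zify.
From Stdlib Require Import ClassicalEpsilon Classical.
Set Implicit Arguments. Unset Strict Implicit. Unset Printing Implicit Defensive.
Import Order.TTheory GRing.Theory Num.Theory.
Local Open Scope ring_scope.

Section Gen.
Variable C : numClosedFieldType.

Lemma sum_pick (I : finType) (a : I) (F : I -> C) :
  (forall i, i != a -> F i = 0) -> \sum_i F i = F a.
Proof. by move=> H; rewrite (bigD1 a) //= big1 ?addr0 // => i /H. Qed.

Lemma sum_pair (I J : finType) (F : (I * J)%type -> C) :
  \sum_p F p = \sum_i \sum_j F (i, j).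
Proof. by rewrite pair_bigA; apply: eq_bigr => -[]. Qed.

Definition ip (I : finType) (v w : vec C I) : C := \sum_x (v x)^* * w x.
Definition qf (I : finType) (X : op C I) (v : vec C I) : C :=
  \sum_x \sum_y (v x)^* * X x y * v y.

Lemma qf_proj (I : finType) (w v : vec C I) : qf (proj w) v = ip v w * (ip v w)^*.
Proof.
rewrite /qf /ip rmorph_sum mulr_suml; apply: eq_bigr => x _.
rewrite mulr_sumr; apply: eq_bigr => y _.
rewrite /proj rmorphM /= conjCK; ring.
Qed.

Lemma qf_sum (I T : finType) (X : op C I) (F : T -> op C I) v :
  (forall x y, X x y = \sum_t F t x y) -> qf X v = \sum_t qf (F t) v.
Proof.
move=> H; rewrite /qf.
under eq_bigr => x _ do under eq_bigr => y _ do
  rewrite H mulr_sumr mulr_suml.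
under eq_bigr => x _ do rewrite exchange_big.
by rewrite exchange_big.
Qed.

Lemma qf_add (I : finType) (X Y : op C I) v : qf (addop X Y) v = qf X v + qf Y v.
Proof.
rewrite /qf -big_split; apply: eq_bigr => x _; rewrite -big_split.
by apply: eq_bigr => y _ /=; rewrite /addop; ring.
Qed.

Lemma qf_sub (I : finType) (X Y : op C I) v : qf (subop X Y) v = qf X v - qf Y v.
Proof.
rewrite /qf -sumrB; apply: eq_bigr => x _; rewrite -sumrB.
by apply: eq_bigr => y _ /=; rewrite /subop; ring.
Qed.

Lemma qf_scale (I : finType) c (X : op C I) v : qf (scaleop c X) v = c * qf X v.
Proof.
rewrite /qf mulr_sumr; apply: eq_bigr => x _; rewrite mulr_sumr.
by apply: eq_bigr => y _ /=; rewrite /scaleop; ring.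
Qed.

Lemma ge0_abs2 (z : C) : 0 <= z * z^*.
Proof. exact: mul_conjC_ge0. Qed.

Definition decompP (I : finType) (P : vec C I -> Prop) (X : op C I) :=
  exists (T : finType) (psi : T -> vec C I),
    (forall t, P (psi t)) /\ forall x y, X x y = \sum_t proj (psi t) x y.

Lemma decomp_psd (I : finType) P (X : op C I) : decompP P X -> psd X.
Proof.
move=> [T [psi [_ H]]] v; rewrite -/(qf X v) (qf_sum _ H).
by apply: sumr_ge0 => t _; rewrite qf_proj ge0_abs2.
Qed.

Lemma decomp_ext (I : finType) P (X Y : op C I) :
  (forall x y, X x y = Y x y) -> decompP P Y -> decompP P X.
Proof. by move=> E [T [psi [HP H]]]; exists T, psi; split=> // x y; rewrite E H. Qed.

Lemma decomp_weaken (I : finType) (P Q : vec C I -> Prop) (X : op C I) :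
  (forall v, P v -> Q v) -> decompP P X -> decompP Q X.
Proof. by move=> PQ [T [psi [HP H]]]; exists T, psi; split=> // t; apply: PQ. Qed.

Lemma decomp_add (I : finType) P (X Y : op C I) :
  decompP P X -> decompP P Y -> decompP P (addop X Y).
Proof.
move=> [T1 [p1 [H1 E1]]] [T2 [p2 [H2 E2]]].
exists (T1 + T2)%type, (fun t => match t with inl s => p1 s | inr s => p2 s end).
split; first by case.
by move=> x y; rewrite big_sumType /addop E1 E2.
Qed.

Lemma sqrt_real (c : C) : 0 <= c -> (sqrtC c)^* = sqrtC c.
Proof. by move=> c0; apply: conj_Creal; apply: ger0_real; rewrite sqrtC_ge0. Qed.

Lemma decomp_scale (I : finType) (P : vec C I -> Prop) c (X : op C I) :
  0 <= c -> (forall v, P v -> P (fun x => sqrtC c * v x)) ->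
  decompP P X -> decompP P (scaleop c X).
Proof.
move=> c0 PS [T [p [H E]]].
exists T, (fun t x => sqrtC c * p t x); split=> [t|x y]; first exact: PS.
rewrite /scaleop E mulr_sumr; apply: eq_bigr => t _.
rewrite /proj rmorphM /= sqrt_real //.
have : sqrtC c ^+ 2 = c by rewrite sqrtCK.
rewrite expr2 => {1}<-; ring.
Qed.

Lemma decomp_proj (I : finType) (P : vec C I -> Prop) (v : vec C I) :
  P v -> decompP P (proj v).
Proof.
by move=> Pv; exists unit, (fun _ => v); split=> // x y; rewrite big_const card_unit /= addr0.
Qed.

End Gen.



Section SNsec.
Variable C : numClosedFieldType.
Variables IA IB : finType.

Lemma SN_exists (X : op C (IA * IB)%type) k :
  SN_decomp X k -> is_SN X (SN X) /\ (SN X <= k)%N.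
Proof.
move=> Hk.
have ex : exists m, is_SN X m.
  elim/ltn_ind: k Hk => k IH Hk.
  case: (classic (exists k', (k' < k)%N /\ SN_decomp X k')) => [[k' [lt d]]|nex].
    exact: IH d.
  exists k; split=> // k' dk'; rewrite leqNgt; apply/negP => lt; apply: nex; eauto.
have H := epsilon_spec (inhabits 0%N) _ ex.
have HS : is_SN X (SN X) by exact: H.
by split=> //; case: HS => _; apply.
Qed.

Lemma sum_enumv (T : finType) (F : T -> C) :
  \sum_(t : T) F t = \sum_(i < #|T|) F (enum_val i).
Proof. by rewrite -(big_enum_val (A := T)); apply: eq_bigl => t; rewrite inE. Qed.

Definition adjm m n (M : 'M[C]_(m, n)) : 'M[C]_(n, m) := \matrix_(i, j) (M j i)^*.

Lemma adjmM m n p (A : 'M[C]_(m, n)) (B : 'M[C]_(n, p)) :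
  adjm (A *m B) = adjm B *m adjm A.
Proof.
apply/matrixP => i j; rewrite !mxE rmorph_sum; apply: eq_bigr => k _.
by rewrite !mxE rmorphM /= mulrC.
Qed.

Lemma adj_zero m n (W : 'M[C]_(m, n)) : W *m adjm W = 0 -> W = 0.
Proof.
move=> H; apply/matrixP => i j; rewrite mxE.
move/matrixP: H => /(_ i i); rewrite mxE [RHS]mxE => E'.
have E : \sum_k W i k * (W i k)^* = 0.
  by rewrite -[in RHS]E'; apply: eq_bigr => k _; rewrite mxE.
have : W i j * (W i j)^* = 0.
  by apply: (psumr_eq0P (P := predT) _ E) => // k _; exact: mul_conjC_ge0.
by move/eqP; rewrite mul_conjC_eq0 => /eqP.
Qed.

Lemma rank_adj m n (M : 'M[C]_(m, n)) : (\rank M <= \rank (M *m adjm M))%N.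
Proof.
set B := M *m adjm M.
have KB : kermx B *m B = 0 by apply: mulmx_ker.
have W0 : kermx B *m M = 0.
  apply: adj_zero; rewrite adjmM mulmxA -(mulmxA (kermx B)) -/B KB.
  by rewrite mul0mx.
have : (kermx B <= kermx M)%MS by apply/sub_kermxP.
move/mxrankS; rewrite !mxrank_ker.
have := rank_leq_row B; have := rank_leq_row M; lia.
Qed.

Definition Pm (psi : vec C (IA * IB)%type) : 'M[C]_(#|IB|, #|IA|) :=
  \matrix_(i, k) psi (enum_val k, enum_val i).

Lemma opmx_ptrA psi : opmx (ptrA (proj psi)) = Pm psi *m adjm (Pm psi).
Proof.
apply/matrixP => i j; rewrite !mxE /ptrA sum_enumv; apply: eq_bigr => k _.
by rewrite !mxE.
Qed.

Lemma SR_Pm psi : schmidt_rank psi = \rank (Pm psi *m adjm (Pm psi)).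
Proof. by rewrite /schmidt_rank opmx_ptrA. Qed.

Lemma SR_ge psi : (\rank (Pm psi) <= schmidt_rank psi)%N.
Proof. by rewrite SR_Pm rank_adj. Qed.

Lemma SR_rep (R : finType) (f : R -> IA -> C) (g : R -> IB -> C) psi :
  (forall a b, psi (a, b) = \sum_r f r a * g r b) -> (schmidt_rank psi <= #|R|)%N.
Proof.
move=> E; rewrite SR_Pm; apply: leq_trans (mxrankM_maxl _ _) _.
pose Gm : 'M[C]_(#|IB|, #|R|) := \matrix_(i, r) g (enum_val r) (enum_val i).
pose Fm : 'M[C]_(#|R|, #|IA|) := \matrix_(r, k) f (enum_val r) (enum_val k).
have -> : Pm psi = Gm *m Fm.
  apply/matrixP => i k; rewrite !mxE E sum_enumv; apply: eq_bigr => r _.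
  by rewrite !mxE mulrC.
by apply: leq_trans (mxrankM_maxl _ _) _; apply: rank_leq_col.
Qed.

End SNsec.



Section Conv.
Variable C : numClosedFieldType.

Lemma decomp_SN (IA IB : finType) (X : op C (IA * IB)%type) P K :
  decompP P X -> (forall v, P v -> (schmidt_rank v <= K)%N) ->
  exists k, SN_decomp X k /\ (k <= K)%N.
Proof.
move=> [T [psi [HP E]]] HK.
exists (\max_(i < #|T|) schmidt_rank (psi (enum_val i))); split.
  exists #|T|, (fun _ => 1), (fun i => psi (enum_val i)); split => //.
  by move=> x y; rewrite E sum_enumv; apply: eq_bigr => i _; rewrite mul1r.
by apply/bigmax_leqP => i _; exact: HK.
Qed.

Variables TA1 TB1 TA2 TB2 : finType.

Lemma reindex_rg (F : vec C ((TA1 * TA2) * (TB1 * TB2))%type) :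
  \sum_x F x = \sum_(z1 : TA1 * TB1) \sum_(z2 : TA2 * TB2) F ((z1.1, z2.1), (z1.2, z2.2)).
Proof.
rewrite [LHS]sum_pair [RHS]sum_pair.
under eq_bigr => a _ do rewrite sum_pair.
rewrite [LHS]sum_pair.
under [RHS]eq_bigr => a1 _ do under eq_bigr => b1 _ do rewrite sum_pair.
by apply: eq_bigr => a1 _; exact: exchange_big.
Qed.

Definition vv (u1 : vec C (TA1 * TB1)%type) (u2 : vec C (TA2 * TB2)%type) :
  vec C ((TA1 * TA2) * (TB1 * TB2))%type :=
  fun x => u1 (x.1.1, x.2.1) * u2 (x.1.2, x.2.2).

Lemma qf_rk (X1 : op C (TA1 * TB1)%type) (X2 : op C (TA2 * TB2)%type) u1 u2 :
  qf (regroup (kron X1 X2)) (vv u1 u2) = qf X1 u1 * qf X2 u2.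
Proof.
rewrite /qf reindex_rg.
under eq_bigr => z1 _ do under eq_bigr => z2 _ do rewrite reindex_rg.
rewrite big_distrlr /=.
under [RHS]eq_bigr => z1 _ do under eq_bigr => w1 _ do rewrite big_distrlr /=.
apply: eq_bigr => z1 _.
apply: eq_bigr => z2 _; apply: eq_bigr => w1 _; apply: eq_bigr => w2 _.
case: z1 => a1 b1; case: z2 => a2 b2; case: w1 => c1 e1; case: w2 => c2 e2.
rewrite /vv /regroup /kron /= rmorphM /=; ring.
Qed.

Lemma decomp_rk (P1 : vec C (TA1 * TB1)%type -> Prop) (P2 : vec C (TA2 * TB2)%type -> Prop) X1 X2 :
  decompP P1 X1 -> decompP P2 X2 ->
  decompP (fun psi : vec C ((TA1 * TA2) * (TB1 * TB2))%type =>
     exists u v, [/\ P1 u, P2 v & forall a1 a2 b1 b2,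
        psi ((a1, a2), (b1, b2)) = u (a1, b1) * v (a2, b2)])
    (regroup (kron X1 X2)).
Proof.
move=> [T1 [p1 [H1 E1]]] [T2 [p2 [H2 E2]]].
exists (T1 * T2)%type, (fun t => vv (p1 t.1) (p2 t.2)); split.
  by move=> [s t]; exists (p1 s), (p2 t); split.
move=> x y; rewrite /regroup /kron /= E1 E2 big_distrlr /= sum_pair.
apply: eq_bigr => s _; apply: eq_bigr => t _.
rewrite /proj /vv /= rmorphM /=; ring.
Qed.

End Conv.



Section Fac.
Variable C : numClosedFieldType.

Lemma sum_delta (I : finType) (x : I) (F : I -> C) :
  \sum_q (x == q)%:R * F q = F x.
Proof.
rewrite (sum_pick (a:=x)) ?eqxx ?mul1r // => q nq.
by rewrite eq_sym (negbTE nq) mul0r.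
Qed.

Lemma gram_id (I : finType) (w : vec C I) :
  ip w w = 1 -> decompP (fun _ => True) (subop (@idop C I) (proj w)).
Proof.
move=> ww.
exists I, (fun q p => (p == q)%:R - w p * (w q)^*); split=> // x y.
have E : forall q, proj (fun p => (p == q)%:R - w p * (w q)^*) x y =
   (x == q)%:R * (y == q)%:R - (x == q)%:R * ((w y)^* * w q)
   - (y == q)%:R * (w x * (w q)^*) + w x * (w y)^* * ((w q)^* * w q).
  by move=> q; rewrite /proj rmorphB /= conjC_nat rmorphM /= conjCK; ring.
rewrite (eq_bigr _ (fun q _ => E q)) big_split /= !sumrB !sum_delta.
rewrite -mulr_sumr -/(ip w w) ww /subop /idop /proj eq_sym; ring.
Qed.

Definition symv (I : finType) (s : I -> I) (e : C) (q : I) : vec C I :=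
  fun p => ((p == q)%:R + e * (p == s q)%:R) / 2%:R.

Definition symop (I : finType) (s : I -> I) (e : C) : op C I :=
  fun x y => ((x == y)%:R + e * (x == s y)%:R) / 2%:R.

Lemma sym_decomp (I : finType) (s : I -> I) (e : C) :
  involutive s -> e^* = e -> e * e = 1 ->
  decompP (fun v => exists q, v = symv s e q) (symop s e).
Proof.
move=> sK ce ee.
exists I, (symv s e); split; first by move=> q; exists q.
move=> x y.
have es : forall (a b : I), (a == s b) = (s a == b).
  by move=> a b; apply/eqP/eqP => [->|<-]; rewrite sK.
have E : forall q, proj (symv s e q) x y =
   ((x == q)%:R * (y == q)%:R + e * ((x == q)%:R * (s y == q)%:R)
   + e * ((s x == q)%:R * (y == q)%:R) + e * e * ((s x == q)%:R * (s y == q)%:R))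
   / 4%:R.
  move=> q; rewrite /proj /symv rmorphM /= rmorphD /= rmorphM /= ce !conjC_nat.
  rewrite fmorphV /= conjC_nat !es; field.
  by rewrite ?pnatr_eq0.
rewrite (eq_bigr _ (fun q _ => E q)) -mulr_suml !big_split /= -!mulr_sumr.
rewrite !sum_delta /symop ee mul1r.
have -> : (s y == s x) = (x == y) by rewrite eq_sym; apply/eqP/eqP => [/(can_inj sK)|->].
have -> : (s y == x) = (x == s y) by rewrite eq_sym es.
have -> : (y == s x) = (x == s y) by rewrite es eq_sym.
rewrite [(y == x)]eq_sym; field.
by rewrite ?pnatr_eq0.
Qed.

End Fac.



Section Dfac.
Variable C : numClosedFieldType.
Variable d : nat.
Hypothesis d0 : (0 < d)%N.
Local Notation I := ('I_d * 'I_d)%type.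

Definition sw (p : I) : I := (p.2, p.1).
Lemma swK : involutive sw. Proof. by case. Qed.

Lemma natr_and (b1 b2 : bool) : ((b1 && b2)%:R : C) = b1%:R * b2%:R.
Proof. by case: b1; case: b2; rewrite /= ?mul1r ?mul0r. Qed.

Lemma sqd_neq0 : sqrtC (d%:R : C) != 0.
Proof. by rewrite sqrtC_eq0 pnatr_eq0 -lt0n. Qed.

Lemma sqd_sq : sqrtC (d%:R : C) * sqrtC d%:R = d%:R.
Proof. by rewrite -expr2 sqrtCK. Qed.

Lemma sqd_conj : (sqrtC (d%:R : C))^* = sqrtC d%:R.
Proof. by rewrite sqrt_real // ler0n. Qed.

Lemma sum_diag : \sum_(p : I) ((p.1 == p.2)%:R : C) = d%:R.
Proof.
rewrite sum_pair (eq_bigr (fun _ => 1)) ?sumr_const ?card_ord // => i _.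
rewrite (eq_bigr (fun j => (i == j)%:R * 1)) ?sum_delta // => j _.
by rewrite mulr1.
Qed.

Lemma ip_OO : ip (Omega C d) (Omega C d) = 1.
Proof.
rewrite /ip /Omega (eq_bigr (fun p : I => (p.1 == p.2)%:R / d%:R)) => [|p _].
  by rewrite -mulr_suml sum_diag divff // pnatr_eq0 -lt0n.
rewrite rmorphM /= conjC_nat fmorphV /= sqd_conj.
by case: (p.1 == p.2); rewrite ?mul0r ?mul1r // -invfM sqd_sq.
Qed.

Lemma ptB_id (x y : I) : ptB (@idop C I) x y = (x == y)%:R.
Proof.
case: x y => a b [a' b']; rewrite /ptB /idop /= !xpair_eqE.
by rewrite [b' == b]eq_sym.
Qed.

Lemma ptB_om (x y : I) : ptB (omega C d) x y = (x == sw y)%:R / d%:R.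
Proof.
case: x y => a b [a' b']; rewrite /ptB /omega /proj /Omega /sw /= xpair_eqE.
rewrite natr_and rmorphM /= conjC_nat fmorphV /= sqd_conj [b == a']eq_sym.
by rewrite mulrACA -invfM sqd_sq.
Qed.

Lemma ptB_1mw (x y : I) : ptB (subop (@idop C I) (omega C d)) x y =
  (1 - d%:R^-1) * symop sw 1 x y + (1 + d%:R^-1) * symop sw (-1) x y.
Proof.
have := ptB_id x y; have := ptB_om x y; rewrite /ptB /subop => -> ->.
rewrite /symop; field; by rewrite pnatr_eq0 -lt0n.
Qed.

Lemma ptB_om2 (x y : I) : ptB (omega C d) x y =
  (symop sw 1 x y - symop sw (-1) x y) / d%:R.
Proof.
rewrite ptB_om /symop; field; by rewrite pnatr_eq0 -lt0n.
Qed.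

Definition e1 : vec C I := fun p => (p.1 == p.2)%:R.
Definition dl (q : I) : vec C I := fun p => (p == q)%:R.

Lemma ip_dl q (f : vec C I) : ip (dl q) f = f q.
Proof.
rewrite /ip /dl; under eq_bigr => p _ do rewrite conjC_nat eq_sym.
exact: sum_delta.
Qed.

Lemma ip_dl2 q q' (f : vec C I) : ip (fun p => dl q p - dl q' p) f = f q - f q'.
Proof.
rewrite /ip /dl; under eq_bigr => p _ do rewrite rmorphB /= !conjC_nat mulrBl [p == q]eq_sym [p == q']eq_sym.
by rewrite sumrB !sum_delta.
Qed.

Lemma ip_e1_O : ip e1 (Omega C d) = sqrtC d%:R.
Proof.
rewrite /ip /e1 /Omega (eq_bigr (fun p : I => (p.1 == p.2)%:R / sqrtC d%:R)) => [|p _].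
  rewrite -mulr_suml sum_diag -{1}sqd_sq mulfK //; exact: sqd_neq0.
by rewrite conjC_nat; case: (p.1 == p.2); rewrite ?mul0r ?mul1r.
Qed.

Lemma qf_id_e1 : qf (@idop C I) e1 = d%:R.
Proof.
rewrite /qf /idop -sum_diag; apply: eq_bigr => x _.
rewrite (eq_bigr (fun y => (x == y)%:R * ((e1 x)^* * e1 y))); last first.
  by move=> y _; ring.
rewrite sum_delta /e1 conjC_nat.
by case: (x.1 == x.2); rewrite ?mul0r ?mul1r.
Qed.

Lemma qf_1mw_e1 : qf (subop (@idop C I) (omega C d)) e1 = 0.
Proof.
rewrite qf_sub qf_id_e1 /omega qf_proj ip_e1_O sqd_conj sqd_sq.
by rewrite subrr.
Qed.

Lemma qf_om_e1 : qf (omega C d) e1 = d%:R.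
Proof. by rewrite /omega qf_proj ip_e1_O sqd_conj sqd_sq. Qed.

Lemma qf_om_dl a b : a != b -> qf (omega C d) (dl (a, b)) = 0.
Proof.
move=> ab; rewrite /omega qf_proj ip_dl /Omega /= (negbTE ab).
by rewrite !mul0r.
Qed.

Lemma qf_om_dl2 a b : qf (omega C d) (fun p => dl (a, a) p - dl (b, b) p) = 0.
Proof.
by rewrite /omega qf_proj ip_dl2 /Omega /= !eqxx subrr mul0r.
Qed.

End Dfac.



Section ZZ.
Variable C : numClosedFieldType.
Variables d1 d2 : nat.
Hypothesis d1_2 : (2 <= d1)%N.
Hypothesis d12 : (d1 <= d2)%N.

Let d1_0 : (0 < d1)%N. Proof. by apply: leq_trans d1_2. Qed.
Let d2_0 : (0 < d2)%N. Proof. by apply: leq_trans d12. Qed.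
Let d1n0 : (d1%:R : C) != 0. Proof. by rewrite pnatr_eq0 -lt0n. Qed.
Let d2n0 : (d2%:R : C) != 0. Proof. by rewrite pnatr_eq0 -lt0n. Qed.

Definition cc : C := (d1%:R - 1) * (d2%:R + 1).

Lemma cc_nat : cc = ((d1 - 1) * (d2 + 1))%N%:R.
Proof. by rewrite /cc natrM natrB ?natrD // ltnW. Qed.

Lemma cc_ge0 : 0 <= cc.
Proof. by rewrite cc_nat ler0n. Qed.

Lemma Z_decomp : decompP (fun _ => True) (Zop C d1 d2).
Proof.
apply: (@decomp_ext _ _ _ _ (addop (regroup (kron (subop (@idop C _) (omega C d1))
                                                  (subop (@idop C _) (omega C d2))))
                              (scaleop cc (regroup (kron (omega C d1) (omega C d2)))))).
  by [].
apply: decomp_add.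
  apply: (decomp_weaken _ (decomp_rk (gram_id (ip_OO C d1_0)) (gram_id (ip_OO C d2_0)))).
  by [].
apply: decomp_scale; [exact: cc_ge0 | by [] |].
apply: (decomp_weaken _ (decomp_rk (decomp_proj (P := fun _ => True) (v := Omega C d1) I)
                                (decomp_proj (P := fun _ => True) (v := Omega C d2) I))).
by [].
Qed.


Definition Rep4 (IA IB : finType) (psi : vec C (IA * IB)%type) :=
  exists (f : bool * bool -> IA -> C) (g : bool * bool -> IB -> C),
    forall a b, psi (a, b) = \sum_r f r a * g r b.

Lemma symv_rep d (e : C) (q : ('I_d * 'I_d)%type) :
  exists (f : bool -> 'I_d -> C) (g : bool -> 'I_d -> C),
    forall a b, symv (@sw d) e q (a, b) = \sum_r f r a * g r b.
Proof.
exists (fun r a => if r then (a == q.1)%:R / 2%:R else e * (a == q.2)%:R / 2%:R).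
exists (fun r b => if r then (b == q.2)%:R else (b == q.1)%:R).
move=> a b; rewrite big_bool /symv /sw /=.
case: q => q1 q2 /=; rewrite !xpair_eqE !natr_and; ring.
Qed.

Lemma rep_prod (e e' : C) (psi : vec C (('I_d1 * 'I_d2) * ('I_d1 * 'I_d2))%type) :
  (exists u v, [/\ (exists q, u = symv (@sw d1) e q), (exists q, v = symv (@sw d2) e' q)
     & forall a1 a2 b1 b2, psi ((a1, a2), (b1, b2)) = u (a1, b1) * v (a2, b2)]) ->
  Rep4 psi.
Proof.
move=> [u [v [[q ->] [q' ->] E]]].
have [f1 [g1 H1]] := symv_rep e q; have [f2 [g2 H2]] := symv_rep e' q'.
exists (fun r a => f1 r.1 a.1 * f2 r.2 a.2), (fun r b => g1 r.1 b.1 * g2 r.2 b.2).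
move=> [a1 a2] [b1 b2]; rewrite E H1 H2 big_distrlr sum_pair /=.
apply: eq_bigr => r _; apply: eq_bigr => s _; ring.
Qed.

Lemma rep_scale (IA IB : finType) (s : C) (psi : vec C (IA * IB)%type) :
  Rep4 psi -> Rep4 (fun x => s * psi x).
Proof.
move=> [f [g E]]; exists (fun r a => s * f r a), g => a b.
by rewrite E mulr_sumr; apply: eq_bigr => r _; rewrite mulrA.
Qed.

Lemma SR_Rep4 (IA IB : finType) (psi : vec C (IA * IB)%type) :
  Rep4 psi -> (schmidt_rank psi <= 4)%N.
Proof.
move=> [f [g E]]; have := SR_rep E.
by rewrite card_prod card_bool.
Qed.

Definition RK (e e' : C) := regroup (kron (symop (@sw d1) e) (symop (@sw d2) e')).

Definition wa : C := (1 - d1%:R^-1) * (1 - d2%:R^-1) + cc / (d1%:R * d2%:R).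
Definition wb : C := (1 - d1%:R^-1) * (1 + d2%:R^-1) - cc / (d1%:R * d2%:R).
Definition wc : C := (1 + d1%:R^-1) * (1 - d2%:R^-1) - cc / (d1%:R * d2%:R).
Definition wd : C := (1 + d1%:R^-1) * (1 + d2%:R^-1) + cc / (d1%:R * d2%:R).

Lemma ZG_id x y : ptB (Zop C d1 d2) x y =
  addop (addop (addop (scaleop wa (RK 1 1)) (scaleop wb (RK 1 (-1))))
               (scaleop wc (RK (-1) 1))) (scaleop wd (RK (-1) (-1))) x y.
Proof.
case: x y => [[a1 a2] [b1 b2]] [[a1' a2'] [b1' b2']].
transitivity (ptB (subop (@idop C _) (omega C d1)) (a1, b1) (a1', b1') *
              ptB (subop (@idop C _) (omega C d2)) (a2, b2) (a2', b2') +
              cc * (ptB (omega C d1) (a1, b1) (a1', b1') * ptB (omega C d2) (a2, b2) (a2', b2'))).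
  by [].
rewrite !ptB_1mw // !ptB_om2 //.
rewrite /addop /scaleop /RK /regroup /kron /= /wa /wb /wc /wd.
field; by rewrite d1n0 d2n0.
Qed.

Lemma w_ge0 : [/\ 0 <= wa, 0 <= wb, 0 <= wc & 0 <= wd].
Proof.
split.
- have -> : wa = (2 * d2 * (d1 - 1))%N%:R / (d1 * d2)%N%:R.
    rewrite /wa /cc !natrM natrB ?(ltnW d1_0) //; field; by rewrite d1n0 d2n0.
  by rewrite divr_ge0 ?ler0n.
- have -> : wb = 0.
    rewrite /wb /cc; field; by rewrite d1n0 d2n0.
  by [].
- have -> : wc = (2 * (d2 - d1))%N%:R / (d1 * d2)%N%:R.
    rewrite /wc /cc !natrM natrB //; field; by rewrite d1n0 d2n0.
  by rewrite divr_ge0 ?ler0n.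
- have -> : wd = (2 * d1 * (d2 + 1))%N%:R / (d1 * d2)%N%:R.
    rewrite /wd /cc !natrM natrD; field; by rewrite d1n0 d2n0.
  by rewrite divr_ge0 ?ler0n.
Qed.

Lemma RK_decomp (e e' : C) : e^* = e -> e * e = 1 -> e'^* = e' -> e' * e' = 1 ->
  decompP (@Rep4 _ _) (RK e e').
Proof.
move=> h1 h2 h3 h4.
exact: (decomp_weaken (@rep_prod e e') (decomp_rk (sym_decomp (@swK d1) h1 h2)
                                                   (sym_decomp (@swK d2) h3 h4))).
Qed.

Lemma ZG_decomp : decompP (@Rep4 _ _) (ptB (Zop C d1 d2)).
Proof.
have [ha hb hc hd] := w_ge0.
have e1c : (1 : C)^* = 1 by rewrite rmorph1.
have e1s : (1 : C) * 1 = 1 by rewrite mulr1.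
have e2c : (-1 : C)^* = -1 by rewrite rmorphN1.
have e2s : (-1 : C) * (-1) = 1 by rewrite mulrNN mulr1.
apply: (decomp_ext ZG_id).
have sc := fun c => @rep_scale _ _ (sqrtC c).
apply: decomp_add; [apply: decomp_add; [apply: decomp_add|]|];
  (apply: decomp_scale => //; first exact: rep_scale); by apply: RK_decomp.
Qed.

End ZZ.



Section LB.
Variable C : numClosedFieldType.

Lemma rank_sum (T : finType) m n (M : T -> 'M[C]_(m, n)) :
  (\rank (\sum_t M t)%R <= \sum_t \rank (M t))%N.
Proof.
apply: (big_ind2 (fun (A : 'M[C]_(m, n)) k => (\rank A <= k)%N)).
- by rewrite mxrank0.
- move=> A a B b hA hB.
  apply: leq_trans (leq_add hA hB).
  apply: leq_trans (mxrank_adds_leqif A B).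
  by apply: mxrankS; apply: addmx_sub_adds.
- by [].
Qed.

Lemma sum_enum_delta (T : finType) (t : T) (F : 'I_#|T| -> C) :
  \sum_k (enum_val k == t)%:R * F k = F (enum_rank t).
Proof.
rewrite (sum_pick (a := enum_rank t)) ?enum_rankK ?eqxx ?mul1r // => k nk.
rewrite (_ : (enum_val k == t) = false) ?mul0r //.
apply/negbTE/eqP => E; move/eqP: nk; apply; by rewrite -E enum_valK.
Qed.

Lemma qf_dec (I : finType) n (p : 'I_n -> C) (psi : 'I_n -> vec C I) (X : op C I) v :
  (forall x y, X x y = \sum_i p i * proj (psi i) x y) ->
  qf X v = \sum_i p i * (ip v (psi i) * (ip v (psi i))^*).
Proof.
move=> E; rewrite (qf_sum (F := fun i => scaleop (p i) (proj (psi i)))) //.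
by apply: eq_bigr => i _; rewrite qf_scale qf_proj.
Qed.

Lemma ker_dec (I : finType) n (p : 'I_n -> C) (psi : 'I_n -> vec C I) (X : op C I) v :
  (forall i, 0 < p i) ->
  (forall x y, X x y = \sum_i p i * proj (psi i) x y) ->
  qf X v = 0 -> forall i, ip v (psi i) = 0.
Proof.
move=> p0 E; rewrite (qf_dec _ E) => S i.
have := psumr_eq0P (P := predT) _ S; move=> /(_ _ i isT) h.
have /eqP : p i * (ip v (psi i) * (ip v (psi i))^*) = 0.
  apply: h => j _; apply: mulr_ge0; [exact: ltW | exact: mul_conjC_ge0].
rewrite mulf_eq0 (negbTE (lt0r_neq0 (p0 i))) /= mul_conjC_eq0.
by move/eqP.
Qed.

Lemma nz_dec (I : finType) n (p : 'I_n -> C) (psi : 'I_n -> vec C I) (X : op C I) v :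
  (forall x y, X x y = \sum_i p i * proj (psi i) x y) ->
  qf X v != 0 -> exists i, ip v (psi i) != 0.
Proof.
move=> E; rewrite (qf_dec _ E) => S.
apply/existsP; apply: contraR S; rewrite negb_exists => /forallP H.
apply/eqP; apply: big1 => i _; have := H i; rewrite negbK => /eqP ->.
by rewrite mul0r mulr0.
Qed.

End LB.



Section LB2.
Variable C : numClosedFieldType.
Variables d1 d2 : nat.
Hypothesis d1_2 : (2 <= d1)%N.
Hypothesis d12 : (d1 <= d2)%N.

Let d1_0 : (0 < d1)%N. Proof. by apply: leq_trans d1_2. Qed.
Let d2_0 : (0 < d2)%N. Proof. by apply: leq_trans d12. Qed.

Local Notation A := ('I_d1 * 'I_d2)%type.

Definition Nt (psi : vec C (A * A)%type) : vec C ('I_d2 * 'I_d2)%type :=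
  fun q => \sum_(a1 : 'I_d1) psi ((a1, q.1), (a1, q.2)).

Lemma ip_vv_e1 (u : vec C ('I_d2 * 'I_d2)%type) psi :
  ip (vv (@e1 C d1) u) psi = ip u (Nt psi).
Proof.
rewrite /ip reindex_rg exchange_big /=; apply: eq_bigr => -[a2 b2] _.
rewrite sum_pair /Nt /= mulr_sumr; apply: eq_bigr => a1 _.
rewrite (eq_bigr (fun b1 => (a1 == b1)%:R * ((u (a2, b2))^* * psi ((a1, a2), (b1, b2))))).
  by rewrite sum_delta.
by move=> b1 _; rewrite /vv /e1 /= rmorphM /= conjC_nat; ring.
Qed.

Lemma Z_lower k : SN_decomp (Zop C d1 d2) k -> (d2 <= d1 * k)%N.
Proof.
move=> [n [p [psi [p0 E Hk]]]].
have qfZ : forall u1 u2, qf (Zop C d1 d2) (vv u1 u2) =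
   qf (subop (@idop C _) (omega C d1)) u1 * qf (subop (@idop C _) (omega C d2)) u2
   + cc C d1 d2 * (qf (omega C d1) u1 * qf (omega C d2) u2).
  by move=> u1 u2; rewrite -!qf_rk -qf_scale -qf_add.
have qfZe1 : forall u2, qf (Zop C d1 d2) (vv (@e1 C d1) u2) =
    cc C d1 d2 * (d1%:R * qf (omega C d2) u2).
  by move=> u2; rewrite qfZ qf_1mw_e1 // qf_om_e1 // mul0r add0r.
have off : forall i a b, a != b -> Nt (psi i) (a, b) = 0.
  move=> i a b ab; rewrite -(ip_dl (a, b) (Nt (psi i))) -ip_vv_e1.
  apply: (ker_dec p0 E).
  by rewrite qfZe1 qf_om_dl // !mulr0.
have diag : forall i a b, Nt (psi i) (a, a) = Nt (psi i) (b, b).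
  move=> i a b; apply/eqP; rewrite -subr_eq0; apply/eqP.
  rewrite -(ip_dl2 (a, a) (b, b) (Nt (psi i))) -ip_vv_e1; apply: (ker_dec p0 E).
  by rewrite qfZe1 qf_om_dl2 !mulr0.
have [i ni] : exists i, ip (vv (@e1 C d1) (@e1 C d2)) (psi i) != 0.
  apply: (nz_dec E); rewrite qfZe1 qf_om_e1 // cc_nat // -!natrM pnatr_eq0.
  by rewrite -lt0n !muln_gt0 d1_0 d2_0 subn_gt0 d1_2 addn1.
have [a0 na0] : exists a, Nt (psi i) (a, a) != 0.
  move: ni; rewrite ip_vv_e1 /ip => ni.
  apply/existsP; apply: contraR ni; rewrite negb_exists => /forallP H.
  apply/eqP; apply: big1 => -[a b] _; rewrite /e1 /=.
  case: (eqVneq a b) => [<-|ab].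
    by rewrite (eqP (negbNE (H a))) mulr0.
  by rewrite conjC_nat mul0r.
set P := Pm (psi i).
pose Nm : 'M[C]_d2 := \matrix_(x, y) Nt (psi i) (y, x).
have NmE : Nm = (Nt (psi i) (a0, a0))%:M.
  apply/matrixP => x y; rewrite !mxE; case: (eqVneq x y) => [->|xy].
    by rewrite mulr1n (diag i y a0).
  by rewrite mulr0n off // eq_sym.
have rN : \rank Nm = d2 by rewrite NmE -scalemx1 mxrank_scale_nz // mxrank1.
pose Lm (a1 : 'I_d1) : 'M[C]_(d2, #|(A : finType)|) := \matrix_(x, l) (enum_val l == (a1, x))%:R.
pose Rm (a1 : 'I_d1) : 'M[C]_(#|(A : finType)|, d2) := \matrix_(k, y) (enum_val k == (a1, y))%:R.
have NmS : Nm = (\sum_(a1 < d1) (Lm a1 *m P *m Rm a1))%R.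
  apply/matrixP => x y; rewrite !mxE summxE; apply: eq_bigr => a1 _.
  rewrite mxE (eq_bigr (fun kk => (enum_val kk == (a1, y))%:R * ((Lm a1 *m P) x kk)));
    last by move=> kk _; rewrite [Rm a1 kk y]mxE mulrC.
  rewrite sum_enum_delta mxE.
  rewrite (eq_bigr (fun l => (enum_val l == (a1, x))%:R * P l (enum_rank (a1, y))));
    last by move=> l _; rewrite mxE.
  by rewrite sum_enum_delta /P /Pm mxE !enum_rankK.
have h1 : (d2 <= d1 * \rank P)%N.
  suff : (\rank Nm <= d1 * \rank P)%N by rewrite rN.
  rewrite NmS; apply: leq_trans (rank_sum _) _.
  have <- : (\sum_(a1 < d1) \rank P)%N = (d1 * \rank P)%N.
    by rewrite sum_nat_const card_ord.
  apply: leq_sum => a1 _.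
  by apply: leq_trans (mxrankM_maxl _ _) _; apply: mxrankM_maxr.
apply: leq_trans h1 _; rewrite leq_mul2l; apply/orP; right.
apply: leq_trans (SR_ge (psi i)) _; rewrite -Hk.
exact: (leq_bigmax (F := fun i => schmidt_rank (psi i)) i).
Qed.

End LB2.



Unset Implicit Arguments.
Set Strict Implicit.

Theorem theorem7 (R : realType) (d1 d2 : nat) :
  (2 <= d1)%N -> (d1 <= d2)%N ->
  let Z := Zop (R[i]) d1 d2 in
  [/\ psd Z, PPT Z, (SN (ptB Z) <= 4)%N &
      Num.ceil (d2%:Q / d1%:Q) - 4 <= (SN Z)%:Z - (SN (ptB Z))%:Z].
Proof.
move=> h1 h2 Z.
have ZD : decompP (fun _ => True) Z by apply: Z_decomp.
have ZGD : decompP (@Rep4 _ _ _) (ptB Z) by apply: ZG_decomp.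
have SNG : (SN (ptB Z) <= 4)%N.
  have [k [Dk k4]] := decomp_SN ZGD (@SR_Rep4 _ _ _).
  have [_ le] := SN_exists Dk; exact: leq_trans le k4.
have [k0 [Dk0 _]] := decomp_SN (K := #|(('I_d1 * 'I_d2)%type : finType)|) ZD
   (fun v _ => rank_leq_row _).
have [[HS _] _] := SN_exists Dk0.
have low := Z_lower h1 h2 HS.
split.
- exact: decomp_psd ZD.
- exact: decomp_psd ZGD.
- exact: SNG.
have c1 : Num.ceil (d2%:Q / d1%:Q) <= (SN Z)%:Z.
  have d1p : (0 : rat) < d1%:R by rewrite ltr0n; apply: leq_trans h1.
  rewrite ceil_le_int ler_pdivrMr // -[(SN Z)%:Z%:~R]/((SN Z)%:R : rat).
  by rewrite -natrM ler_nat mulnC.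
have c2 : ((SN (ptB Z))%:Z <= 4)%R by rewrite lez_nat.
lia.
Qed.
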